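(* Let $E$ be a finite set, $\mathcal{W}\subseteq\{+,-,0\}^E$ an affine oriented matroid, and $X,Y\in\mathcal{W}$ with $\underline{X}=\underline{Y}$, $X\neq -Y$ and $I(X,-Y)\cap\mathcal{W}=\emptyset$. Then $B(X,-Y)\cap\mathcal{W}=\emptyset$.
   Context: For $X\in\{+,-,0\}^E$: support $\underline{X}=\{e:X_e\neq0\}$; $(-X)_e=-X_e$; composition $(X\circ Y)_e=X_e$ if $X_e\neq0$, else $Y_e$; $S(X,Y)=\{e: X_e,Y_e\neq0, X_e\neq Y_e\}$. An oriented matroid on $F$ is $\mathcal{O}\subseteq\{+,-,0\}^F$ with: (O1) zero vector in $\mathcal{O}$; (O2) $X\in\mathcal{O}\Rightarrow -X\in\mathcal{O}$; (O3) $X,Y\in\mathcal{O}\Rightarrow X\circ Y\in\mathcal{O}$; (O4) if $X,Y\in\mathcal{O}$, $\underline{X}=\underline{Y}$, $e\in S(X,Y)$, there is $Z\in\mathcal{O}$ with $Z_e=0$ and $Z_f=(X\circ Y)_f=(Y\circ X)_f$ for all $f\notin S(X,Y)$. $\mathcal{W}\subseteq\{+,-,0\}^E$ is an affine oriented matroid if there exist $g\notin E$ and an oriented matroid $\mathcal{O}$ on $E\cup\{g\}$ with $\mathcal{W}=\{X|_E: X\in\mathcal{O}, X_g=+\}$. For $X,Y$ with $\underline{X}=\underline{Y}$ and $X\neq Y$: $I_e(X,Y)=\{V : \underline{V}\subseteq\underline{X}\setminus\{e\}, V_f=X_f\ \forall f\notin S(X,Y)\}$ for $e\in S(X,Y)$,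 $I(X,Y)=\bigcup_{e\in S(X,Y)}I_e(X,Y)$, and $B(X,Y)=\{V\in\{+,-,0\}^E: V\notin\{X,Y\}, \underline{V}=\underline{X}, V_f=X_f\ \forall f\notin S(X,Y)\}$. *)

(* Defs.v *)
From HB Require Import structures.
From mathcomp Require Import all_boot.
Set Implicit Arguments. Unset Strict Implicit. Unset Printing Implicit Defensive.

Inductive sign := Pos | Neg | Zero.

Definition sign_to (s : sign) : option bool :=
  match s with Pos => Some true | Neg => Some false | Zero => None end.
Definition sign_of (o : option bool) : sign :=
  match o with Some true => Pos | Some false => Neg | None => Zero end.
Lemma sign_toK : cancel sign_to sign_of. Proof. by case. Qed.
HB.instance Definition _ := Finite.copy sign (can_type sign_toK).

Definition sopp (s : sign) : sign :=
  match s with Pos => Neg | Neg => Pos | Zero => Zero end.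

Definition svec (F : finType) := {ffun F -> sign}.

Section SignVectors.
Variable F : finType.
Implicit Types X Y Z V : svec F.

Definition supp X : {set F} := [set e | X e != Zero].
Definition vneg X : svec F := [ffun e => sopp (X e)].
Definition comp X Y : svec F := [ffun e => if X e != Zero then X e else Y e].
Definition sep X Y : {set F} :=
  [set e | [&& X e != Zero, Y e != Zero & X e != Y e]].
Definition vzero : svec F := [ffun _ => Zero].

Definition oriented_matroid (O : {set svec F}) : Prop :=
  [/\ vzero \in O,
      (forall X, X \in O -> vneg X \in O),
      (forall X Y, X \in O -> Y \in O -> comp X Y \in O)
    & (forall X Y e, X \in O -> Y \in O -> supp X = supp Y -> e \in sep X Y ->
         exists2 Z, Z \in O &
           Z e = Zero /\
           (forall f, f \notin sep X Y -> Z f = comp X Y f /\ Z f = comp Y X f))].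

Definition Ie X Y (e : F) : {set svec F} :=
  [set V | (supp V \subset supp X :\ e) &&
           [forall f, (f \notin sep X Y) ==> (V f == X f)]].
Definition Iset X Y : {set svec F} := \bigcup_(e in sep X Y) Ie X Y e.
Definition Bset X Y : {set svec F} :=
  [set V | [&& V != X, V != Y, supp V == supp X &
           [forall f, (f \notin sep X Y) ==> (V f == X f)]]].
End SignVectors.

(* Affine oriented matroid: ground set E + {g}, modelled as option E with
   g = None. *)
Definition restrictE (E : finType) (X : svec (option E)) : svec E :=
  [ffun e => X (Some e)].

Definition affine_oriented_matroid (E : finType) (W : {set svec E}) : Prop :=
  exists O : {set svec (option E)},
    oriented_matroid O /\
    W = [set restrictE X | X in [set X in O | X None == Pos]].

(* Main.v *)
Require Import Defs.
From mathcomp Require Import all_boot.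

Theorem lemma2p3 (E : finType) (W : {set svec E}) :
  affine_oriented_matroid W ->
  forall X Y : svec E, X \in W -> Y \in W ->
    supp X = supp Y -> X != vneg Y ->
    Iset X (vneg Y) :&: W = set0 ->
    Bset X (vneg Y) :&: W = set0.
Proof.
move=> [O [[_ _ _ O4] ->]] X Y XW _ _ _ HI.
apply/setP => V; rewrite inE in_set0; apply/negP => /andP [VB VW].
move: VB; rewrite inE => /and4P [VX _ /eqP sVX /forallP Vagr].
case/imsetP: XW => Xh; rewrite inE => /andP [XO /eqP XN] Xdef.
case/imsetP: VW => Vh; rewrite inE => /andP [VO /eqP VN] Vdef.
subst V X.
have supf : forall f, (Xh (Some f) != Zero) = (Vh (Some f) != Zero).
  move=> f; have := congr1 (fun A : {set E} => f \in A) sVX.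
  by rewrite !inE !ffunE => ->.
have sXV : supp Xh = supp Vh.
  apply/setP => [[f|]]; rewrite !inE ?supf //.
  by rewrite XN VN.
have [e He] : exists e, Xh (Some e) != Vh (Some e).
  apply/existsP; move: VX; apply: contraR; rewrite negb_exists => /forallP H.
  apply/eqP/ffunP => f; rewrite !ffunE; apply/eqP; have := H f; by rewrite negbK eq_sym.
have eS : Some e \in sep Xh Vh.
  rewrite inE He andbT.
  have := supf e; case: (Xh (Some e)) He; case: (Vh (Some e)) => //.
have [Z ZO [Ze Zf]] := O4 _ _ _ XO VO sXV eS.
have agr : forall f, f \notin sep (restrictE Xh) (vneg Y) -> Vh (Some f) = Xh (Some f).
  by move=> f Hf; have := Vagr f; rewrite Hf !ffunE => /eqP.
have Zs : forall f, Some f \notin sep Xh Vh -> Z (Some f) = if Xh (Some f) != Zero then Xh (Some f) else Vh (Some f).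
  by move=> f Hf; have [-> _] := Zf _ Hf; rewrite ffunE.
have : restrictE Z \in Iset (restrictE Xh) (vneg Y) :&: [set restrictE X | X in [set X in O | X None == Pos]].
  rewrite inE; apply/andP; split.
    apply/bigcupP; exists e.
      apply: contraT => He'; move: He; by rewrite (agr _ He') eqxx.
    rewrite inE; apply/andP; split.
      apply/subsetP => f; rewrite !inE ffunE => Hz.
      apply/andP; split; first by apply: contraNneq Hz => ->; rewrite Ze.
      case: (boolP (Some f \in sep Xh Vh)); first by rewrite inE ?ffunE => /and3P [].
      move=> /Zs Zeq; move: Hz; rewrite Zeq ffunE.
      have := supf f; case: (Xh (Some f)); case: (Vh (Some f)) => //.
    apply/forallP => f; apply/implyP => Hf; rewrite !ffunE.
    have Hf' : Some f \notin sep Xh Vh by rewrite inE (agr _ Hf) eqxx !andbF.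
    rewrite (Zs _ Hf') (agr _ Hf); by case: ifP => // /negbFE /eqP.
  apply/imsetP; exists Z => //; rewrite inE ZO /=.
  have Hn : None \notin sep Xh Vh by rewrite inE XN VN eqxx !andbF.
  have [-> _] := Zf _ Hn; by rewrite ffunE XN.
by rewrite HI in_set0.
Qed.
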